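(* Let $k\geq 1$ be an integer and let $D$ be a $k$-degenerate directed graph. Then $f(D)\leq \frac{k-1}{k+1}\,n(D)$.
   Context: Directed graphs are oriented graphs: finite, no loops, no multiple arcs and no pair of antiparallel arcs. $n(D)$ is the number of vertices and $f(D)$ is the minimum size of a set $F\subseteq V(D)$ such that $D-F$ contains no directed cycle. A directed graph is $k$-degenerate if its underlying undirected graph is $k$-degenerate, i.e. has an ordering of the vertices in which every vertex has at most $k$ neighbours preceding it. *)

(* Defs.v *)
From mathcomp Require Import all_boot all_order all_algebra.
From mathcomp Require Import boolp.
Set Implicit Arguments. Unset Strict Implicit. Unset Printing Implicit Defensive.

(* A directed graph on a finite vertex type T is given by its arc relation a:
   a x y means there is an arc x -> y.  A rel has no multiple arcs. *)

Definition oriented (T : finType) (a : rel T) : Prop :=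
  irreflexive a /\ (forall x y, a x y -> ~~ a y x).

Definition und_adj (T : finType) (a : rel T) : rel T :=
  fun x y => a x y || a y x.

Definition degenerate (T : finType) (a : rel T) (k : nat) : Prop :=
  exists ord : T -> nat, injective ord /\
    forall x, #|[set y | und_adj a x y & ord y < ord x]| <= k.

Definition directed_cycle (T : finType) (a : rel T) (c : seq T) : bool :=
  [&& c != [::], uniq c & cycle a c].

Definition fvs (T : finType) (a : rel T) (F : {set T}) : Prop :=
  forall c : seq T, directed_cycle a c -> ~~ all (fun v => v \notin F) c.

(* f(D): minimum size of a feedback vertex set ([set: T] is always one, so
   #|T| is a valid default). *)
Definition fvs_number (T : finType) (a : rel T) : nat :=
  \big[minn/#|T|]_(F : {set T} | `[< fvs a F >]) #|F|.

(* Main.v *)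
Require Import Defs.
From mathcomp Require Import all_boot all_order all_algebra.
Import Order.TTheory GRing.Theory Num.Theory.
From mathcomp Require zify.
From Stdlib Require Import Lia.
From mathcomp Require boolp.

Definition covers {T : finType} (a : rel T) (U F : {set T}) : Prop :=
  forall c : seq T, directed_cycle a c -> all (fun v => v \in U) c ->
    has (fun v => v \in F) c.

Definition sideset {T : finType} (a : rel T) (U : {set T}) (x : T) (b : bool)
  : {set T} :=
  if b then [set z in U | a z x] else [set z in U | a x z].

Lemma sideset_sub {T : finType} (a : rel T) U x b : sideset a U x b \subset U.
Proof. by case: b; apply/subsetP => z; rewrite inE => /andP[]. Qed.

Lemma sideset_mono {T : finType} (a : rel T) (U V : {set T}) x b :
  V \subset U -> sideset a V x b \subset sideset a U x b.
Proof.
move=> /subsetP VU; case: b; apply/subsetP => z; rewrite !inE => /andP[zV ->];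
  by rewrite VU.
Qed.

Lemma x_notin_side {T : finType} (a : rel T) U x b :
  irreflexive a -> x \notin sideset a U x b.
Proof. by move=> irr; case: b; rewrite inE irr andbF. Qed.

Lemma red_cover {T : finType} (a : rel T) (U F : {set T}) x b :
  covers a (U :\: (x |: sideset a U x b)) F ->
  covers a U (F :|: sideset a U x b).
Proof.
move=> cov c dc allU.
case hZ: (has (fun v => v \in sideset a U x b) c).
  case/hasP: hZ => v vc vZ; apply/hasP; exists v => //; by rewrite inE vZ orbT.
move/negbT/hasPn: hZ => hZ.
have xc : x \notin c.
  apply/negP => xc; case/and3P: dc => _ _ cyc.
  case: b {cov} hZ => hZ.
  - have azx := prev_cycle cyc xc.
    have zc : prev c x \in c by rewrite mem_prev.
    by move: (hZ _ zc); rewrite /sideset inE (allP allU _ zc) azx.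
  - have axz := next_cycle cyc xc.
    have zc : next c x \in c by rewrite mem_next.
    by move: (hZ _ zc); rewrite /sideset inE (allP allU _ zc) axz.
have: has (fun v => v \in F) c.
  apply: cov => //; apply/allP => v vc.
  rewrite in_setD in_setU1 negb_or (allP allU v vc) andbT.
  by rewrite ((memPn xc) v vc) (hZ v vc).
by apply: sub_has => v; rewrite inE => ->.
Qed.

Lemma card_red {T : finType} (a : rel T) (U : {set T}) x b :
  irreflexive a -> x \in U ->
  #|U| = #|U :\: (x |: sideset a U x b)| + 1 + #|sideset a U x b|.
Proof.
move=> irr xU.
have sub : x |: sideset a U x b \subset U by rewrite subUset sub1set xU sideset_sub.
rewrite -(cardsID (x |: sideset a U x b) U) (setIidPr sub) cardsU1 x_notin_side //.
rewrite /=; lia.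
Qed.

Definition good {T : finType} (a : rel T) (k : nat) (U : {set T}) : Prop :=
  exists F : {set T}, covers a U F /\ k.+1 * #|F| <= (k - 1) * #|U|.

Lemma light_step {T : finType} (a : rel T) k (U : {set T}) x b :
  irreflexive a -> x \in U ->
  good a k (U :\: (x |: sideset a U x b)) ->
  2 * #|sideset a U x b| <= k - 1 -> good a k U.
Proof.
move=> irr xU [F [cov hF]] hm.
exists (F :|: sideset a U x b); split; first exact: red_cover.
have hc := card_red a U x b irr xU.
have hu : #|F :|: sideset a U x b| <= #|F| + #|sideset a U x b|.
  by rewrite -cardsUI leq_addr.
move: hF hm hc hu.
set f := #|F|; set m := #|sideset a U x b|; set u := #|U|;
  set u' := #|U :\: _|; set g := #|F :|: _|.
move=> hF hm hc hu.
have : k.+1 * g <= k.+1 * (f + m) by rewrite leq_mul2l hu orbT.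
nia.
Qed.

Lemma hard_step {T : finType} (a : rel T) k (U : {set T}) x b y b2 z :
  irreflexive a -> x \in U -> y \in U -> y != x -> y \notin sideset a U x b ->
  z \in x |: sideset a U x b -> z \in sideset a U y b2 ->
  2 * #|sideset a U x b| <= k -> 2 * #|sideset a U y b2| <= k ->
  (forall V : {set T}, #|V| < #|U| -> good a k V) -> good a k U.
Proof.
move=> irr xU yU yx ynZ zX zY h1 h2 IH.
set U' := U :\: (x |: sideset a U x b).
have yU' : y \in U' by rewrite in_setD in_setU1 negb_or yx ynZ yU.
have hc1 := card_red a U x b irr xU.
have hc2 := card_red a U' y b2 irr yU'.
have hlt : #|sideset a U' y b2| < #|sideset a U y b2|.
  apply: proper_card; apply/properP; split.
    by apply: sideset_mono; apply: subsetDl.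
  exists z => //; apply/negP => /(subsetP (sideset_sub a U' y b2)).
  by rewrite in_setD zX.
have [F [cov hF]] : good a k (U' :\: (y |: sideset a U' y b2)).
  by apply: IH; rewrite hc1 -/U' hc2; lia.
exists ((F :|: sideset a U' y b2) :|: sideset a U x b); split.
  by apply: red_cover; apply: red_cover.
have hu : #|(F :|: sideset a U' y b2) :|: sideset a U x b| <=
          #|F| + #|sideset a U' y b2| + #|sideset a U x b|.
  apply: (leq_trans (n := #|F :|: sideset a U' y b2| + #|sideset a U x b|)).
    by rewrite -cardsUI leq_addr.
  by rewrite leq_add2r -cardsUI leq_addr.
move: hF h1 h2 hc1 hc2 hlt hu.
set f := #|F|; set m1 := #|sideset a U x b|; set m2 := #|sideset a U' y b2|;
  set M2 := #|sideset a U y b2|; set u := #|U|; set u' := #|U'|;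
  set u'' := #|U' :\: _|; set g := #|_ :|: _|.
move=> hF h1 h2 hc1 hc2 hlt hu.
have : k.+1 * g <= k.+1 * (f + m2 + m1) by rewrite leq_mul2l hu orbT.
nia.
Qed.

Lemma deg_split {T : finType} (a : rel T) (U : {set T}) x :
  (forall x y, a x y -> ~~ a y x) ->
  #|[set z in U | und_adj a x z]| =
  #|sideset a U x true| + #|sideset a U x false|.
Proof.
move=> asym.
have -> : [set z in U | und_adj a x z] =
          sideset a U x false :|: sideset a U x true.
  by apply/setP => z; rewrite !inE /und_adj andb_orr.
have I0 : sideset a U x false :&: sideset a U x true = set0.
  apply/setP => z; rewrite !inE; case: (z \in U) => //=.
  apply/negP => /andP[h1 h2]; by have := asym _ _ h1; rewrite h2.
by rewrite -[RHS]addnC -cardsUI I0 cards0 addn0.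
Qed.

Lemma bigmin_seq (I : eqType) (r : seq I) (P : pred I) (G : I -> nat) d i0 :
  i0 \in r -> P i0 -> \big[minn/d]_(i <- r | P i) G i <= G i0.
Proof.
elim: r => //= j r IHr; rewrite in_cons big_cons => /orP[/eqP <- -> | ir Pi].
  exact: geq_minl.
case: (P j); last exact: IHr.
by rewrite geq_min IHr ?orbT.
Qed.

Lemma good_set0 {T : finType} (a : rel T) k : good a k set0.
Proof.
exists set0; split; last by rewrite cards0 muln0.
move=> c /and3P[cn _ _] allU; case: c cn allU => // v c _ /andP[].
by rewrite inE.
Qed.

Lemma main_ind {T : finType} (a : rel T) (k : nat) (ord : T -> nat) :
  oriented a -> 1 <= k -> injective ord ->
  (forall x, #|[set y | und_adj a x y & ord y < ord x]| <= k) ->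
  forall n (U : {set T}), #|U| <= n -> good a k U.
Proof.
move=> [irr asym] k1 inj degc.
elim=> [|n IHn] U hU.
  have U0 : U = set0 by apply/eqP; rewrite -cards_eq0 -leqn0.
  by rewrite U0; apply: good_set0.
have IH : forall V : {set T}, #|V| < #|U| -> good a k V.
  by move=> V hV; apply: IHn; lia.
case: (set_0Vmem U) => [-> | [x0 x0U]]; first exact: good_set0.
case: (boolP [exists y in U, [exists b : bool, 2 * #|sideset a U y b| <= k - 1]]).
  case/exists_inP => y yU /existsP[b hb].
  apply: (light_step a k U y b irr yU _ hb); apply: IH.
  have := card_red a U y b irr yU; lia.
rewrite negb_exists_in => /forall_inP hard0.
have hard : forall y b, y \in U -> k <= 2 * #|sideset a U y b|.
  move=> y b yU; have := hard0 y yU; rewrite negb_exists => /forallP /(_ b).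
  rewrite -ltnNge; lia.
have : 0 < #|sideset a U x0 true| by have := hard x0 true x0U; lia.
rewrite card_gt0 => /set0Pn [z0]; rewrite inE => /andP[z0U az0].
set W := [set w in U | [exists z in U, und_adj a w z && (ord w < ord z)]].
have [w0 w0W] : exists w0, w0 \in W.
  have neq : ord z0 != ord x0.
    by apply/eqP => /inj e; rewrite e irr in az0.
  case: (ltngtP (ord z0) (ord x0)) => h.
  - exists z0; rewrite inE z0U; apply/exists_inP; exists x0 => //.
    by rewrite /und_adj az0 h.
  - exists x0; rewrite inE x0U; apply/exists_inP; exists z0 => //.
    by rewrite /und_adj az0 orbT h.
  - by rewrite h eqxx in neq.
case: (@arg_maxnP _ w0 (fun w => w \in W) ord w0W) => w wW wmax.
have L : forall x z, x \in U -> ord w < ord x -> z \in U -> und_adj a x z ->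
    ord z < ord x.
  move=> x z xU wx zU adj; rewrite ltnNge; apply/negP => hle.
  have xz : ord x < ord z.
    rewrite ltn_neqAle hle andbT; apply/negP => /eqP /inj exz.
    by rewrite -exz /und_adj irr in adj.
  have : x \in W by rewrite inE xU; apply/exists_inP; exists z => //; rewrite adj xz.
  move/wmax; lia.
have Lk : forall x b, x \in U -> ord w < ord x -> 2 * #|sideset a U x b| = k.
  move=> x b xU wx.
  have hdeg : #|sideset a U x true| + #|sideset a U x false| <= k.
    rewrite -deg_split //; apply: leq_trans (degc x); apply: subset_leq_card.
    apply/subsetP => z; rewrite !inE => /andP[zU adj].
    by rewrite adj (L x z).
  have := hard x true xU; have := hard x false xU; case: b; lia.
move: (wW); rewrite inE => /andP[wU /exists_inP[u uU /andP[wu wltu]]].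
case: (boolP [exists u2 in U, [&& u2 != u, und_adj a w u2 & ord w < ord u2]]).
  case/exists_inP => u2 u2U /and3P[u2u wu2 wltu2].
  have nadj : ~~ und_adj a u u2.
    apply/negP => adj.
    have h1 := L u u2 uU wltu u2U adj.
    have adj' : und_adj a u2 u by rewrite /und_adj orbC.
    have h2 := L u2 u u2U wltu2 uU adj'.
    lia.
  apply: (hard_step a k U u (a w u) u2 (a w u2) w
            irr uU u2U u2u _ _ _ _ _ IH).
  - rewrite /sideset; case: (a w u); rewrite inE u2U /=;
      apply/negP => h; case/negP: nadj; by rewrite /und_adj h ?orbT.
  - rewrite in_setU1; apply/orP; right; rewrite /sideset.
    case e: (a w u); rewrite inE wU //=.
    by move: wu; rewrite /und_adj e.
  - rewrite /sideset; case e: (a w u2); rewrite inE wU //=.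
    by move: wu2; rewrite /und_adj e.
  - by rewrite Lk.
  - by rewrite Lk.
rewrite negb_exists_in => /forall_inP noU2.
have Lw : forall z, z \in U -> z != u -> und_adj a w z -> ord z < ord w.
  move=> z zU zu adj; have := noU2 z zU; rewrite zu adj /= -leqNgt => hle.
  rewrite ltn_neqAle hle andbT; apply/negP => /eqP /inj ezw.
  by rewrite ezw /und_adj irr in adj.
have degw : #|sideset a U w true| + #|sideset a U w false| <= k.+1.
  rewrite -deg_split //.
  apply: (leq_trans (n := #|u |: [set y | und_adj a w y & ord y < ord w]|)).
    apply: subset_leq_card; apply/subsetP => z; rewrite !inE => /andP[zU adj].
    case: (eqVneq z u) => [-> //|zu].
    by rewrite adj (Lw z zU zu adj) orbT.
  rewrite cardsU1; have := degc w; case: (u \notin _) => /=; lia.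
have keven := Lk u true uU wltu.
have hw1 := hard w true wU; have hw2 := hard w false wU.
have wneu : w != u by apply/eqP => e; rewrite e ltnn in wltu.
have une : u != w by rewrite eq_sym.
case/orP: (wu) => [awu | auw].
- have nauw : ~~ a u w := asym _ _ awu.
  case: (leqP (2 * #|sideset a U w false|) k) => hout.
  + apply: (hard_step a k U u (false) w (false) u
              irr uU wU wneu _ _ _ _ hout IH).
    * by rewrite inE wU.
    * by rewrite setU11.
    * by rewrite inE uU awu.
    * by rewrite Lk.
  + apply: (hard_step a k U w (true) u (true) w
              irr wU uU une _ _ _ _ _ IH).
    * by rewrite inE uU.
    * by rewrite setU11.
    * by rewrite inE wU awu.
    * lia.
    * by rewrite keven.
- have nawu : ~~ a w u := asym _ _ auw.
  case: (leqP (2 * #|sideset a U w true|) k) => hin.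
  + apply: (hard_step a k U u (true) w (true) u
              irr uU wU wneu _ _ _ _ hin IH).
    * by rewrite inE wU.
    * by rewrite setU11.
    * by rewrite inE uU auw.
    * by rewrite Lk.
  + apply: (hard_step a k U w (false) u (false) w
              irr wU uU une _ _ _ _ _ IH).
    * by rewrite inE uU.
    * by rewrite setU11.
    * by rewrite inE wU auw.
    * lia.
    * by rewrite Lk.
Qed.

Theorem mainTheorem5 (T : finType) (a : rel T) (k : nat) :
  oriented a -> (1 <= k)%N -> degenerate a k ->
  ((fvs_number a)%:R <= ((k%:R - 1) / (k%:R + 1)) * (#|T|)%:R :> rat)%R.
Proof.
move=> ori k1 [ord [inj degc]].
have [F [cov hF]] := main_ind a k ord ori k1 inj degc _ [set: T] (leqnn _).
have fv : fvs a F.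
  move=> c dc; have hh : has (fun v => v \in F) c.
    by apply: cov => //; apply/allP => v _; rewrite inE.
  apply/negP => /allP H; case/hasP: hh => v vc vF.
  by move: (H v vc); rewrite vF.
have hle : (fvs_number a <= #|F|)%N.
  rewrite /fvs_number; apply: bigmin_seq; first exact: mem_index_enum.
  exact: boolp.asboolT.
rewrite cardsT in hF.
have e1 : ((k%:R - 1 : rat) = (k - 1)%:R)%R by rewrite natrB // mulr1n.
rewrite e1 natr1 mulrAC ler_pdivlMr ?ltr0Sn //.
apply: (le_trans (y := ((#|F| * k.+1)%:R)%R)).
  by rewrite natrM ler_pM2r ?ltr0Sn // ler_nat.
by rewrite -natrM ler_nat mulnC.
Qed.
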